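(* There is no graph class $\mathcal{F}$ such that, for all graphs $G$ and $H$, any one of the following holds: (1) $G\equiv_{\mathcal{F}}H$ iff $a(G)=a(H)$, where $a$ denotes the order of the automorphism group; (2) $G\equiv_{\mathcal{F}}H$ iff $\alpha(G)=\alpha(H)$, where $\alpha$ is the size of a largest independent set; (3) $G\equiv_{\mathcal{F}}H$ iff $\omega(G)=\omega(H)$, where $\omega$ is the size of a largest clique; (4) $G\equiv_{\mathcal{F}}H$ iff $\chi(G)=\chi(H)$, where $\chi$ is the chromatic number.
   Context: All graphs are finite, undirected, without multiple edges. $\hom(F,G)$ counts homomorphisms $F\to G$; $G\equiv_{\mathcal{F}}H$ means $\hom(F,G)=\hom(F,H)$ for all $F\in\mathcal{F}$. *)

(* Defs.v *)
From mathcomp Require Import all_boot perm.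
Set Implicit Arguments. Unset Strict Implicit. Unset Printing Implicit Defensive.

Record graph := Graph {
  gn : nat;
  gadj : rel 'I_gn;
  gsym : symmetric gadj;
  girr : irreflexive gadj }.
Arguments gadj : clear implicits.

Definition hom (F G : graph) : nat :=
  #|[pred f : {ffun 'I_(gn F) -> 'I_(gn G)} |
     [forall x, forall y, gadj F x y ==> gadj G (f x) (f y)]]|.

Definition hom_equiv (C : graph -> Prop) (G H : graph) : Prop :=
  forall F, C F -> hom F G = hom F H.

Definition aut (G : graph) : nat :=
  #|[pred p : {perm 'I_(gn G)} |
     [forall x, forall y, gadj G (p x) (p y) == gadj G x y]]|.

Definition independent (G : graph) (S : {set 'I_(gn G)}) : bool :=
  [forall x in S, forall y in S, ~~ gadj G x y].
Definition clique (G : graph) (S : {set 'I_(gn G)}) : bool :=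
  [forall x in S, forall y in S, (x != y) ==> gadj G x y].

Definition alpha (G : graph) : nat :=
  \max_(S : {set 'I_(gn G)} | independent S) #|S|.
Definition omega (G : graph) : nat :=
  \max_(S : {set 'I_(gn G)} | clique S) #|S|.

Definition colorable (G : graph) (k : nat) : bool :=
  [exists c : {ffun 'I_(gn G) -> 'I_k},
     [forall x, forall y, gadj G x y ==> (c x != c y)]].

Lemma colorable_n (G : graph) : colorable G (gn G).
Proof.
apply/existsP; exists [ffun x => x]; apply/forallP => x; apply/forallP => y.
apply/implyP => Hxy; rewrite !ffunE; apply/eqP => Exy.
by move: Hxy; rewrite Exy girr.
Qed.

Definition chi (G : graph) : nat := ex_minn (ex_intro (fun k => colorable G k) _ (colorable_n G)).

(* Main.v *)
Require Import Defs.
From mathcomp Require Import all_boot perm.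
From mathcomp Require Import zify.
Set Implicit Arguments. Unset Strict Implicit. Unset Printing Implicit Defensive.

Definition ishom (F G : graph) (f : {ffun 'I_(gn F) -> 'I_(gn G)}) : bool :=
  [forall x, forall y, gadj F x y ==> gadj G (f x) (f y)].

Arguments ishom : clear implicits.

Lemma homE F G : hom F G = #|[set f | ishom F G f]|.
Proof. by rewrite /hom cardsE. Qed.

Lemma hom0 F X : gn F = 0 -> hom F X = 1.
Proof.
case: F => n a s i /= En; subst n.
rewrite /hom /=.
rewrite (eq_card (B := predT)); last first.
  move=> f; rewrite !inE; apply/forallP => -[x Hx]; by [].
by rewrite card_ffun !card_ord.
Qed.

Lemma hom_lt F G H (phi : 'I_(gn G) -> 'I_(gn H)) (g : {ffun 'I_(gn F) -> 'I_(gn H)}) x0 :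
  injective phi -> (forall x y, gadj G x y -> gadj H (phi x) (phi y)) ->
  ishom F H g -> (forall y, phi y != g x0) -> hom F G < hom F H.
Proof.
move=> phiI phiA gH gN.
rewrite !homE.
pose Phi := fun f : {ffun 'I_(gn F) -> 'I_(gn G)} => [ffun x => phi (f x)].
have PhiI : injective Phi.
  move=> f1 f2 E; apply/ffunP => x.
  by apply: phiI; move/ffunP: E => /(_ x); rewrite !ffunE.
rewrite -(card_imset _ PhiI).
apply: proper_card; apply/properP; split.
  apply/subsetP => h /imsetP [f]; rewrite inE => fH ->.
  rewrite inE; apply/forallP => x; apply/forallP => y; apply/implyP => Axy.
  rewrite !ffunE; apply: phiA.
  by move/forallP: fH => /(_ x) /forallP /(_ y) /implyP; apply.
exists g; first by rewrite inE.
apply/imsetP => -[f _ Eg].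
by move: (gN (f x0)); rewrite Eg ffunE eqxx.
Qed.

Lemma main (inv : graph -> nat) C :
  (forall G H, hom_equiv C G H <-> inv G = inv H) ->
  (forall F, 0 < gn F -> exists G H, inv G = inv H /\ hom F G <> hom F H) ->
  forall G H, inv G = inv H.
Proof.
move=> P Sep G H; apply/P => F CF.
case: (posnP (gn F)) => [F0|Fpos]; first by rewrite !hom0.
have [G' [H' [E D]]] := Sep F Fpos.
exfalso; apply: D; exact: (proj2 (P G' H') E F CF).
Qed.

Definition Kg (n : nat) : graph.
Proof.
refine (@Graph n (fun x y => x != y) _ _).
- by move=> x y; rewrite eq_sym.
- by move=> x; rewrite eqxx.
Defined.

Definition Eg (n : nat) : graph.
Proof.
refine (@Graph n (fun x y => false) _ _); by [].
Defined.

Definition Dg (n : nat) : graph.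
Proof.
refine (@Graph (n + n) (fun x y : 'I_(n + n) => (x != y) && ((x < n) == (y < n))) _ _).
- by move=> x y; rewrite eq_sym [(y < n) == _]eq_sym.
- by move=> x; rewrite eqxx.
Defined.

Lemma chi_omega (N : nat) (H : graph) (phi : 'I_N -> 'I_(gn H)) :
  (forall x y, x != y -> gadj H (phi x) (phi y)) -> colorable H N ->
  chi H = N /\ omega H = N.
Proof.
move=> phiA colN.
have phiI : injective phi.
  move=> x y E; apply/eqP; apply/negPn/negP => /phiA; by rewrite E girr.
split.
  rewrite /chi; case: ex_minnP => m colm minm.
  apply/eqP; rewrite eqn_leq (minm _ colN) /=.
  case/existsP: colm => c /forallP cP.
  have cI : injective (fun x => c (phi x)).
    move=> x y E; apply/eqP; apply/negPn/negP => /phiA Axy.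
    by move: (cP (phi x)) => /forallP /(_ (phi y)) /implyP /(_ Axy); rewrite E eqxx.
  by move: (leq_card _ cI); rewrite !card_ord.
apply/eqP; rewrite eqn_leq; apply/andP; split.
  apply/bigmax_leqP => S /forallP SP.
  case/existsP: colN => c /forallP cP.
  have cI : {in S &, injective c}.
    move=> x y xS yS E; apply/eqP; apply/negPn/negP => nxy.
    move: (SP x) => /implyP /(_ xS) /forallP /(_ y) /implyP /(_ yS) /implyP /(_ nxy) Axy.
    by move: (cP x) => /forallP /(_ y) /implyP /(_ Axy); rewrite E eqxx.
  rewrite -(card_in_imset cI).
  by apply: leq_trans (max_card _) _; rewrite card_ord.
have -> : N = #|phi @: [set: 'I_N]| by rewrite card_imset // cardsT card_ord.
apply: leq_bigmax_cond.
apply/forallP => x; apply/implyP => /imsetP [a _ ->]; apply/forallP => y; apply/implyP => /imsetP [b _ ->].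
apply/implyP => nab; apply: phiA; apply: contra nab => /eqP ->; by [].
Qed.

Lemma alphaK N : 0 < N -> alpha (Kg N) = 1.
Proof.
move=> Np; apply/eqP; rewrite eqn_leq; apply/andP; split.
  apply/bigmax_leqP => S /forallP SP; apply/card_le1_eqP => x y xS yS.
  by move: (SP x) => /implyP /(_ xS) /forallP /(_ y) /implyP /(_ yS) /negPn /eqP.
have -> : 1 = #|[set (Ordinal Np : 'I_(gn (Kg N)))]| by rewrite cards1.
apply: leq_bigmax_cond.
apply/forallP => x; apply/implyP; rewrite inE => /eqP ->; apply/forallP => y; apply/implyP; rewrite inE => /eqP ->.
by rewrite girr.
Qed.

Lemma alpha0 G : gn G = 0 -> alpha G = 0.
Proof.
move=> G0; apply/eqP; rewrite -leqn0; apply/bigmax_leqP => S _.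
by apply: leq_trans (max_card _) _; rewrite card_ord G0.
Qed.

Lemma autE n : aut (Eg n) = n`!.
Proof.
rewrite /aut -card_Sn; apply: eq_card => p; rewrite !inE.
by apply/forallP => x; apply/forallP => y.
Qed.

Lemma autK n : aut (Kg n) = n`!.
Proof.
rewrite /aut -card_Sn; apply: eq_card => p; rewrite !inE.
by apply/forallP => x; apply/forallP => y; rewrite /= (inj_eq perm_inj).
Qed.

Lemma gadjK n (x y : 'I_n) : gadj (Kg n) x y = (x != y). Proof. by []. Qed.
Lemma gadjD n (x y : 'I_(n + n)) : gadj (Dg n) x y = (x != y) && ((x < n) == (y < n)).
Proof. by []. Qed.
Lemma gadjE n (x y : 'I_n) : gadj (Eg n) x y = false. Proof. by []. Qed.

Lemma hom_pos F G (g : {ffun 'I_(gn F) -> 'I_(gn G)}) : ishom F G g -> 0 < hom F G.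
Proof. by move=> gH; rewrite homE; apply/card_gt0P; exists g; rewrite inE. Qed.

Lemma sep_aut F : 0 < gn F -> exists G H, aut G = aut H /\ hom F G <> hom F H.
Proof.
move=> Fp.
case: (boolP [exists x, exists y, gadj F x y]) => [/existsP [x /existsP [y Axy]] | noE].
  exists (Kg (gn F)), (Eg (gn F)); rewrite autK autE; split => //.
  have -> : hom F (Eg (gn F)) = 0.
    rewrite homE; apply/eqP; rewrite cards_eq0; apply/eqP/setP => f; rewrite !inE.
    apply/negP => /forallP /(_ x) /forallP /(_ y) /implyP /(_ Axy); by rewrite gadjE.
  apply/eqP; rewrite -lt0n; apply: (@hom_pos F (Kg (gn F)) [ffun x => x]).
  apply/forallP => a; apply/forallP => b; apply/implyP => Aab; rewrite gadjK !ffunE.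
  by apply: contraTneq Aab => ->; rewrite girr.
exists (Eg 0), (Eg 1); rewrite !autE; split => //.
have -> : hom F (Eg 0) = 0.
  rewrite homE; apply/eqP; rewrite cards_eq0; apply/eqP/setP => f; rewrite !inE.
  by case: (f (Ordinal Fp)).
apply/eqP; rewrite eq_sym -lt0n; apply: (@hom_pos F (Eg 1) [ffun x => ord0]).
apply/forallP => a; apply/forallP => b; apply/implyP => Aab.
by move: noE => /existsP; case; exists a; apply/existsP; exists b.
Qed.

Lemma sep_alpha F : 0 < gn F -> exists G H, alpha G = alpha H /\ hom F G <> hom F H.
Proof.
move=> Fp; exists (Kg (gn F)), (Kg (gn F).+1); rewrite !alphaK //; split => //.
apply/eqP; rewrite neq_ltn; apply/orP; left.
apply: (@hom_lt F (Kg (gn F)) (Kg (gn F).+1) (lift ord0) [ffun x => widen_ord (leqnSn _) x] (Ordinal Fp)).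
- exact: lift_inj.
- by move=> x y; rewrite !gadjK (inj_eq (@lift_inj _ ord0)).
- apply/forallP => a; apply/forallP => b; apply/implyP => Aab; rewrite gadjK !ffunE.
  apply: contraTneq Aab => /(congr1 val) /= /val_inj ->; by rewrite girr.
- move=> y; rewrite ffunE.
  have -> : widen_ord (leqnSn (gn F)) (Ordinal Fp) = ord0 by apply: val_inj.
  by rewrite eq_sym neq_lift.
Qed.

Lemma colDg N : 0 < N -> colorable (Dg N) N.
Proof.
move=> Np; apply/existsP; exists [ffun x : 'I_(N + N) => Ordinal (ltn_pmod x Np)].
apply/forallP => x; apply/forallP => y; apply/implyP; rewrite gadjD !ffunE.
case/andP => nxy /eqP sxy; apply/eqP => /(congr1 val) /= E.
move/eqP: nxy; apply; apply: val_inj => /=.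
have hx : x < N + N := ltn_ord x. have hy : y < N + N := ltn_ord y.
move: sxy E; case: (ltnP x N) => xN; case: (ltnP y N) => yN //= _.
  by rewrite !modn_small.
have ex : x %% N = x - N by rewrite -{1}(subnK xN) modnDr modn_small //; lia.
have ey : y %% N = y - N by rewrite -{1}(subnK yN) modnDr modn_small //; lia.
rewrite ex ey => E; by rewrite -(subnK xN) E subnK.
Qed.

Lemma sep_co F : 0 < gn F -> exists G H,
  (chi G = chi H /\ omega G = omega H) /\ hom F G <> hom F H.
Proof.
move=> Fp; exists (Kg (gn F)), (Dg (gn F)).
have [c1 o1] : chi (Kg (gn F)) = gn F /\ omega (Kg (gn F)) = gn F.
  apply: (@chi_omega _ _ id) => //; exact: colorable_n.
have [c2 o2] : chi (Dg (gn F)) = gn F /\ omega (Dg (gn F)) = gn F.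
  apply: (@chi_omega (gn F) (Dg (gn F)) (fun x : 'I_(gn F) => lshift (gn F) x)); last exact: colDg.
  move=> x y nxy; rewrite gadjD /= !ltn_ord eqxx andbT.
  by apply: contra nxy => /eqP /(congr1 val) /= /val_inj ->.
rewrite c1 o1 c2 o2; split => //.
apply/eqP; rewrite neq_ltn; apply/orP; left.
apply: (@hom_lt F (Kg (gn F)) (Dg (gn F)) (lshift (gn F)) [ffun x => rshift (gn F) x] (Ordinal Fp)).
- by move=> x y /(congr1 val) /= /val_inj.
- move=> x y; rewrite gadjK gadjD /= !ltn_ord eqxx andbT => nxy.
  by apply: contra nxy => /eqP /(congr1 val) /= /val_inj ->.
- apply/forallP => a; apply/forallP => b; apply/implyP => Aab; rewrite gadjD !ffunE /=.
  rewrite !ltnNge !leq_addr /= eqxx andbT.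
  apply: contraTneq Aab => /(congr1 val) /= /eqP; rewrite eqn_add2l => /eqP /val_inj ->.
  by rewrite girr.
- move=> y; rewrite ffunE; apply/negP => /eqP /(congr1 val) /=.
  move=> E; have := ltn_ord y; rewrite E /=; lia.
Qed.

Theorem corollary20 :
  ~ exists C : graph -> Prop,
      (forall G H : graph, hom_equiv C G H <-> aut G = aut H) \/
      (forall G H : graph, hom_equiv C G H <-> alpha G = alpha H) \/
      (forall G H : graph, hom_equiv C G H <-> omega G = omega H) \/
      (forall G H : graph, hom_equiv C G H <-> chi G = chi H).
Proof.
case=> C [P|[P|[P|P]]].
- have := main P sep_aut (Eg 1) (Eg 2); by rewrite !autE.
- have := main P sep_alpha (Kg 0) (Kg 1); by rewrite alpha0 // alphaK.
- have S : forall F, 0 < gn F -> exists G H, omega G = omega H /\ hom F G <> hom F H.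
    by move=> F Fp; have [G [H [[_ E] D]]] := sep_co Fp; exists G, H.
  have := main P S (Kg 1) (Kg 2).
  have [_ ->] := @chi_omega 1 (Kg 1) id (fun x y => id) (colorable_n _).
  by have [_ ->] := @chi_omega 2 (Kg 2) id (fun x y => id) (colorable_n _).
- have S : forall F, 0 < gn F -> exists G H, chi G = chi H /\ hom F G <> hom F H.
    by move=> F Fp; have [G [H [[E _] D]]] := sep_co Fp; exists G, H.
  have := main P S (Kg 1) (Kg 2).
  have [-> _] := @chi_omega 1 (Kg 1) id (fun x y => id) (colorable_n _).
  by have [-> _] := @chi_omega 2 (Kg 2) id (fun x y => id) (colorable_n _).
Qed.
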